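(* For every round $t$ and every node $s\in S$, the GLR statistic $Z_s(t)=\inf_{\bm{\lambda}\in\mathrm{Alt}_s(\hat{\bm{\mu}}(t))}\sum_{\ell\in\mathcal{D}(s)}N_\ell(t)\,d(\hat\mu_\ell(t),\lambda_\ell)$ satisfies the following recursion. If $a_{s_0}(\hat{\bm{\mu}}(t))=$'win': for a leaf $s$, $Z_s(t)=N_s(t)d(\hat\mu_s(t),\theta)$ if $\hat\mu_s(t)\ge\theta$ and $Z_s(t)=0$ otherwise; $Z_s(t)=\sum_{c\in\mathcal{C}(s)}Z_c(t)$ if $L(s)=$MAX; $Z_s(t)=\min_{c\in\mathcal{C}(s)}Z_c(t)$ if $L(s)=$MIN. If $a_{s_0}(\hat{\bm{\mu}}(t))=$'lose': for a leaf $s$, $Z_s(t)=N_s(t)d(\hat\mu_s(t),\theta)$ if $\hat\mu_s(t)<\theta$ and $Z_s(t)=0$ otherwise; $Z_s(t)=\sum_{c\in\mathcal{C}(s)}Z_c(t)$ if $L(s)=$MIN; $Z_s(t)=\min_{c\in\mathcal{C}(s)}Z_c(t)$ if $L(s)=$MAX.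
   Context: $\mathcal{T}$ is a finite rooted tree with node set $S$, root $s_0$, children sets $\mathcal{C}(s)$, leaf set $\mathcal{L}(\mathcal{T})$, and $\mathcal{D}(s)$ the set of leaves descending from $s$ ($\{s\}$ for a leaf). Internal nodes have labels $L(s)\in\{\text{MAX},\text{MIN}\}$. $X\subseteq\mathbb{R}$ is the mean-parameter set of a one-parameter exponential family, $d(x,y)$ the KL divergence between members with means $x$ and $y$, $\theta\in X$ a threshold. For $\bm{\lambda}$: $V_s(\bm{\lambda})=\lambda_s$ at a leaf, max (resp. min) of children's values at MAX (resp. MIN) nodes; $a_s(\bm{\lambda})=$'win' iff $V_s(\bm{\lambda})\ge\theta$, else 'lose'. At each round a leaf is sampled and a reward observed; $N_\ell(t)$ is the number of samples of leaf $\ell$ up to round $t$ and $\hat\mu_\ell(t)\in X$ its empirical mean; $\hat{\bm{\mu}}(t)=(\hat\mu_\ell(t))_\ell$. $\mathrm{Alt}_s(\hat{\bm{\mu}}(t))=\{\bm{\lambda}\in X^{\mathcal{D}(s)}:a_s(\bm{\lambda})\neq a_{s_0}(\hat{\bm{\mu}}(t))\}$. *)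

(* Defs.v *)
From HB Require Import structures.
From mathcomp Require Import all_boot all_order all_algebra.
From mathcomp Require Import all_classical all_reals all_analysis.
Set Implicit Arguments. Unset Strict Implicit. Unset Printing Implicit Defensive.
Import Order.TTheory GRing.Theory Num.Theory numFieldNormedType.Exports.
Local Open Scope classical_set_scope.
Local Open Scope ring_scope.

Inductive label := MAX | MIN.

Inductive tree :=
| Leaf of nat
| Node of label & seq tree.

Fixpoint leaves (t : tree) : seq nat :=
  match t with
  | Leaf l => [:: l]
  | Node _ cs => flatten (map leaves cs)
  end.

(* Prop-level list membership (tree has no eqType) *)
Fixpoint In (A : Type) (a : A) (s : seq A) : Prop :=
  match s with [::] => False | b :: s' => b = a \/ In a s' end.

Inductive is_node (t0 : tree) : tree -> Prop :=
| is_root : is_node t0 t0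
| is_child (lb : label) (cs : seq tree) (c : tree) :
    is_node t0 (Node lb cs) -> In c cs -> is_node t0 c.

Definition wf_tree (t0 : tree) : Prop :=
  uniq (leaves t0) /\ (forall lb cs, is_node t0 (Node lb cs) -> cs <> [::]).

Section Values.
Variable R : realType.

Definition maxseq (s : seq R) : R :=
  match s with [::] => 0 | x :: s' => foldr Num.max x s' end.
Definition minseq (s : seq R) : R :=
  match s with [::] => 0 | x :: s' => foldr Num.min x s' end.

Fixpoint tval (lam : nat -> R) (t : tree) : R :=
  match t with
  | Leaf l => lam l
  | Node MAX cs => maxseq (map (tval lam) cs)
  | Node MIN cs => minseq (map (tval lam) cs)
  end.

(* a_s(lambda) = 'win' (true) iff V_s(lambda) >= theta, else 'lose' (false) *)
Definition answer (theta : R) (lam : nat -> R) (t : tree) : bool :=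
  theta <= tval lam t.

(* Given by its natural-parameter space I (a nonempty open interval) and its
   log-partition function b, differentiable on I with derivative db strictly
   increasing and continuous on I (b strictly convex).  The mean of the member
   with natural parameter eta is db eta; the mean-parameter set is
   X = db @` I, and the KL divergence between the members with means x, y is
   the Bregman divergence  b(eta y) - b(eta x) - x (eta y - eta x). *)
Record expfam := ExpFam {
  ef_I : set R;
  ef_b : R -> R;
  ef_db : R -> R;
  ef_I_neq0 : ef_I !=set0;
  ef_I_open : open ef_I;
  ef_I_interval : is_interval ef_I;
  ef_derive : forall eta, ef_I eta -> is_derive eta 1 ef_b (ef_db eta);
  ef_db_incr : forall x y, ef_I x -> ef_I y -> x < y -> ef_db x < ef_db y;
  ef_db_cont : {within ef_I, continuous ef_db}
}.

Variable F : expfam.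

Definition meanset : set R := ef_db F @` ef_I F.

Definition natpar (x : R) : R := xget 0 [set e | ef_I F e /\ ef_db F e = x].

Definition kl (x y : R) : R :=
  ef_b F (natpar y) - ef_b F (natpar x) - x * (natpar y - natpar x).

Definition glr (theta : R) (t0 : tree) (N : nat -> nat) (mu : nat -> R)
    (s : tree) : R :=
  inf [set z | exists lam : nat -> R,
         (forall l, l \in leaves s -> meanset (lam l)) /\
         answer theta lam s != answer theta mu t0 /\
         z = \sum_(l <- leaves s) (N l)%:R * kl (mu l) (lam l)].

End Values.

(* Main.v *)
Require Import Defs.
From HB Require Import structures.
From mathcomp Require Import all_boot all_order all_algebra.
From mathcomp Require Import all_classical all_reals all_analysis.
From mathcomp Require Import ring lra.
Import Order.TTheory GRing.Theory Num.Theory numFieldNormedType.Exports.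
Local Open Scope classical_set_scope.
Local Open Scope ring_scope.
Set Implicit Arguments.
Unset Strict Implicit.

Definition tree_ind' (P : tree -> Prop) (HL : forall n, P (Leaf n))
  (HN : forall lb cs, (forall c, In c cs -> P c) -> P (Node lb cs)) :
  forall t, P t :=
  fix f t := match t return P t with
  | Leaf n => HL n
  | Node lb cs => HN lb cs ((fix g (cs : seq tree) : forall c, In c cs -> P c :=
       match cs return forall c, In c cs -> P c with
       | [::] => fun c H => False_ind _ H
       | c0 :: cs' => fun c H => match H with
                                 | or_introl e => eq_ind c0 P (f c0) c e
                                 | or_intror H' => g cs' c H' end
       end) cs)
  end.

Lemma map_ext_In (A B : Type) (f g : A -> B) (cs : seq A) :
  (forall c, In c cs -> f c = g c) -> map f cs = map g cs.
Proof.
elim: cs => //= c cs IH h; rewrite h; last by left.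
by rewrite IH // => c' hc; apply: h; right.
Qed.

Lemma In_map_mem (A : Type) (B : eqType) (f : A -> B) c cs :
  In c cs -> f c \in map f cs.
Proof.
elim: cs => //= c0 cs IH [->|h]; rewrite inE ?eqxx //.
by rewrite IH ?orbT.
Qed.

Lemma mem_map_In (A : Type) (B : eqType) (f : A -> B) y cs :
  y \in map f cs -> exists c, In c cs /\ y = f c.
Proof.
elim: cs => //= c0 cs IH; rewrite inE => /orP[/eqP->|/IH[c [h1 h2]]].
- by exists c0; split => //; left.
- by exists c; split => //; right.
Qed.

Lemma In_flatten c cs l :
  In c cs -> l \in leaves c -> l \in flatten (map leaves cs).
Proof.
elim: cs => //= c0 cs IH [->|h] hl; rewrite mem_cat ?hl //.
by rewrite IH ?orbT.
Qed.

Lemma flatten_In cs l :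
  l \in flatten (map leaves cs) -> exists c, In c cs /\ l \in leaves c.
Proof.
elim: cs => //= c0 cs IH; rewrite mem_cat => /orP[h|/IH[c [h1 h2]]].
- by exists c0; split => //; left.
- by exists c; split => //; right.
Qed.

Lemma In_uniq c cs : In c cs -> uniq (flatten (map leaves cs)) -> uniq (leaves c).
Proof.
elim: cs => //= c0 cs IH [->|h]; rewrite cat_uniq => /and3P[u1 _ u2] //.
exact: IH.
Qed.

Lemma tval_ext (R : realType) (lam lam' : nat -> R) s :
  (forall l, l \in leaves s -> lam l = lam' l) -> Defs.tval lam s = Defs.tval lam' s.
Proof.
elim/tree_ind': s => [n /= h|lb cs IH h].
  by apply: h; rewrite inE.
have e : map (Defs.tval lam) cs = map (Defs.tval lam') cs.
  apply: map_ext_In => c hc; apply: IH => // l hl; apply: h => /=.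
  exact: (In_flatten hc).
by case: lb {h} => /=; rewrite e.
Qed.

Lemma is_node_leaves t0 s : is_node t0 s ->
  {subset leaves s <= leaves t0} /\ (uniq (leaves t0) -> uniq (leaves s)).
Proof.
elim => [|lb cs c _ [IH1 IH2] hc]; first by split.
split.
- move=> l hl; apply: IH1 => /=; exact: (In_flatten hc).
- by move=> /IH2 /= u; exact: (In_uniq hc).
Qed.

Lemma foldr_max_const (R : realType) (v : R) (cs : seq tree) :
  foldr Num.max v (map (fun _ => v) cs) = v.
Proof. by elim: cs => //= c cs ->; rewrite maxxx. Qed.

Lemma foldr_min_const (R : realType) (v : R) (cs : seq tree) :
  foldr Num.min v (map (fun _ => v) cs) = v.
Proof. by elim: cs => //= c cs ->; rewrite minxx. Qed.

Lemma tval_const (R : realType) (v : R) t0 :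
  (forall lb cs, is_node t0 (Node lb cs) -> cs <> [::]) ->
  forall s, is_node t0 s -> Defs.tval (fun _ => v) s = v.
Proof.
move=> hne; elim/tree_ind' => [n //|lb cs IH hs].
have e : map (Defs.tval (fun _ => v)) cs = map (fun _ => v) cs.
  apply: map_ext_In => c hc; apply: IH => //; exact: (is_child hs hc).
case: lb hs => hs /=; rewrite e; have := hne _ _ hs; clear IH e hs; case: cs => //= c cs _.
- exact: foldr_max_const.
- exact: foldr_min_const.
Qed.

Lemma maxseq_lt (R : realType) (th : R) (s : seq R) : s <> [::] ->
  (maxseq s < th) = all (fun x => x < th) s.
Proof.
case: s => // x s _ /=; elim: s => /= [|y s IH]; first by rewrite andbT.
by rewrite gt_max IH andbCA.
Qed.

Lemma maxseq_ge (R : realType) (th : R) (s : seq R) : s <> [::] ->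
  (th <= maxseq s) = has (fun x => th <= x) s.
Proof.
case: s => // x s _ /=; elim: s => /= [|y s IH]; first by rewrite orbF.
by rewrite le_max IH orbCA.
Qed.

Lemma minseq_lt (R : realType) (th : R) (s : seq R) : s <> [::] ->
  (minseq s < th) = has (fun x => x < th) s.
Proof.
case: s => // x s _ /=; elim: s => /= [|y s IH]; first by rewrite orbF.
by rewrite gt_min IH orbCA.
Qed.

Lemma minseq_ge (R : realType) (th : R) (s : seq R) : s <> [::] ->
  (th <= minseq s) = all (fun x => th <= x) s.
Proof.
case: s => // x s _ /=; elim: s => /= [|y s IH]; first by rewrite andbT.
by rewrite le_min IH andbCA.
Qed.

Lemma minseq_le (R : realType) (s : seq R) x : x \in s -> minseq s <= x.
Proof.
case: s => // y s; rewrite inE /= => /orP[/eqP->|].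
- elim: s => //= z s IH; by rewrite ge_min IH orbT.
- elim: s => //= z s IH; rewrite inE => /orP[/eqP->|/IH h].
  + by rewrite ge_min lexx.
  + by rewrite ge_min h orbT.
Qed.

Lemma minseq_mem (R : realType) (s : seq R) : s <> [::] -> minseq s \in s.
Proof.
case: s => // y s _ /=; elim: s => /= [|z s IH]; first by rewrite inE.
rewrite /Num.min; case: ifP => _; first by rewrite !inE eqxx orbT.
move: IH; rewrite !inE => /orP[->|->]; by rewrite ?orbT.
Qed.

Lemma all_map_In (A : Type) (R : realType) (P : pred R) (f : A -> R) cs :
  all P (map f cs) <-> (forall c, In c cs -> P (f c)).
Proof.
elim: cs => /= [|c cs IH]; first by split.
split.
- by move=> /andP[h1 /IH h2] c' [<-|h] //; exact: h2.
- move=> h; apply/andP; split; first by apply: h; left.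
  by apply/IH => c' hc; apply: h; right.
Qed.

Lemma has_map_In (A : Type) (R : realType) (P : pred R) (f : A -> R) cs :
  has P (map f cs) <-> (exists c, In c cs /\ P (f c)).
Proof.
elim: cs => /= [|c cs IH]; first by split => // [[c []]].
split.
- move=> /orP[h|/IH[c' [h1 h2]]]; first by exists c; split => //; left.
  by exists c'; split => //; right.
- move=> [c' [[<-|h1] h2]]; first by rewrite h2.
  by apply/orP; right; apply/IH; exists c'.
Qed.

Section Analytic.
Variable R : realType.
Variable F : expfam R.
Local Notation I := (ef_I F).
Local Notation b := (ef_b F).
Local Notation db := (ef_db F).
Local Notation X := (meanset F).

Lemma natparP x : X x -> I (natpar F x) /\ db (natpar F x) = x.
Proof.
case=> e Ie <-; rewrite /natpar; apply: (@xgetI _ 0 [set e0 | I e0 /\ db e0 = db e] e).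
by split.
Qed.

Lemma db_inj e1 e2 : I e1 -> I e2 -> db e1 = db e2 -> e1 = e2.
Proof.
move=> h1 h2 he; case: (ltgtP e1 e2) => // h.
- by have := ef_db_incr h1 h2 h; rewrite he ltxx.
- by have := ef_db_incr h2 h1 h; rewrite he ltxx.
Qed.

Lemma natpar_db e : I e -> natpar F (db e) = e.
Proof.
move=> Ie; have [h1 h2] := @natparP (db e) (ex_intro2 _ _ e Ie erefl).
exact: db_inj.
Qed.

Lemma natpar_lt x y : X x -> X y -> x < y -> natpar F x < natpar F y.
Proof.
move=> Xx Xy xy; have [Ix dx] := natparP Xx; have [Iy dy] := natparP Xy.
rewrite ltNge; apply/negP; rewrite le_eqVlt => /orP[/eqP e|h].
- by move: xy; rewrite -dx -dy e ltxx.
- by have := ef_db_incr Iy Ix h; rewrite dx dy => /lt_trans/(_ xy); rewrite ltxx.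
Qed.

Lemma natpar_le x y : X x -> X y -> x <= y -> natpar F x <= natpar F y.
Proof.
move=> Xx Xy; rewrite le_eqVlt => /orP[/eqP->//|h].
exact/ltW/natpar_lt.
Qed.

Lemma I_sub e1 e2 : I e1 -> I e2 -> forall z, e1 <= z <= e2 -> I z.
Proof. exact: ef_I_interval. Qed.

Lemma breg_lt e1 e2 : I e1 -> I e2 -> e1 < e2 ->
  exists2 c, I c /\ e1 < c < e2 & b e2 - b e1 = db c * (e2 - e1).
Proof.
move=> I1 I2 lt12.
have sub : forall z, z \in `[e1, e2] -> I z.
  by move=> z; rewrite in_itv /= => hz; exact: (I_sub I1 I2 hz).
have hd : forall x, x \in `]e1, e2[ -> is_derive x 1 b (db x).
  move=> x hx; apply: ef_derive; apply: sub.
  by move: hx; rewrite !in_itv /= => /andP[/ltW -> /ltW ->].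
have hcont : {within `[e1, e2], continuous b}.
  apply: derivable_within_continuous => x hx.
  have := ef_derive (sub x hx) => hh; exact: ex_derive.
have [c hc ->] := MVT lt12 hd hcont.
exists c => //; split; last by move: hc; rewrite in_itv.
by apply: sub; move: hc; rewrite !in_itv /= => /andP[/ltW -> /ltW ->].
Qed.

Lemma breg_ge0 e1 e2 : I e1 -> I e2 -> 0 <= b e2 - b e1 - db e1 * (e2 - e1).
Proof.
move=> I1 I2; case: (ltgtP e1 e2) => h.
- have [c [Ic /andP[h1 h2]] ->] := breg_lt I1 I2 h.
  rewrite -mulrBl; apply: mulr_ge0; rewrite subr_ge0 ltW //.
  exact: ef_db_incr.
- have [c [Ic /andP[h1 h2]] e] := breg_lt I2 I1 h.
  have -> : b e2 - b e1 = db c * (e2 - e1).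
    by apply: oppr_inj; rewrite opprB e -mulrN opprB.
  rewrite -mulrBl -mulrNN !opprB; apply: mulr_ge0; rewrite subr_ge0 ltW //.
  exact: ef_db_incr.
- by rewrite h !subrr mulr0 subrr.
Qed.

Lemma kl_ge0 x y : X x -> X y -> 0 <= kl F x y.
Proof.
move=> Xx Xy; have [Ix dx] := natparP Xx; have [Iy dy] := natparP Xy.
by rewrite /kl -{2}dx; exact: breg_ge0.
Qed.

Lemma kl_xx x : kl F x x = 0.
Proof. by rewrite /kl !subrr mulr0 subrr. Qed.

Lemma kl_diff x y z : kl F x y - kl F x z = kl F z y + (z - x) * (natpar F y - natpar F z).
Proof. rewrite /kl; ring. Qed.

Lemma kl_mono_lt m th l : X m -> X th -> X l -> th <= m -> l <= th ->
  kl F m th <= kl F m l.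
Proof.
move=> Xm Xt Xl hm hl; rewrite -subr_ge0 kl_diff; apply: addr_ge0; first exact: kl_ge0.
apply: mulr_le0; rewrite subr_le0 //; exact: natpar_le.
Qed.

Lemma kl_mono_gt m th l : X m -> X th -> X l -> m <= th -> th <= l ->
  kl F m th <= kl F m l.
Proof.
move=> Xm Xt Xl hm hl; rewrite -subr_ge0 kl_diff; apply: addr_ge0; first exact: kl_ge0.
apply: mulr_ge0; rewrite subr_ge0 //; exact: natpar_le.
Qed.

Lemma approx_below m th eps : X m -> X th -> 0 < eps ->
  exists l, [/\ X l, l < th & kl F m l < kl F m th + eps].
Proof.
move=> Xm Xt he; have [It dt] := natparP Xt; set et := natpar F th in It dt *.
have gc : {for et, continuous (b - ((cst m) \* id))%R}.
  apply: continuousB; last apply: continuousM.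
  - apply: differentiable_continuous.
    apply/derivable1_diffP; have := ef_derive It => hh; exact: ex_derive.
  - exact: cst_continuous.
  - exact: cvg_id.
have := gc; move/cvgrPdist_lt => /(_ eps he) hg.
have hI : nbhs et I by apply: (open_nbhs_nbhs); split => //; exact: ef_I_open.
have [r r0 hr] := (nbhs_ballP et _).1 (filterI hg hI).
have hb : ball et r (et - r / 2).
  rewrite -ball_normE /ball_ /= opprB addrC subrK ger0_norm ?divr_ge0 ?ltW //.
  by rewrite ltr_pdivrMr // ltr_pMr // ltr1n.
have [h hIl] := hr _ hb.
exists (db (et - r/2)); split.
- by exists (et - r / 2).
- by rewrite -dt; apply: ef_db_incr => //; rewrite ltrBlDr ltrDl divr_gt0.
- rewrite /kl natpar_db // -/et.
  have h2 : (b - cst m \* id) (et - r / 2) - (b - cst m \* id) et < eps.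
    by rewrite -opprB (le_lt_trans _ h) // -normrN ler_norm.
  move: h2; rewrite /= /cst.
  set e2 := et - r / 2; set p := natpar F m.
  move=> h2; rewrite -subr_gt0; rewrite -subr_gt0 in h2.
  have -> : b et - b p - m * (et - p) + eps - (b e2 - b p - m * (e2 - p)) =
     eps - (b e2 - m * e2 - (b et - m * et)) by ring.
  exact: h2.
Qed.

End Analytic.

Lemma inf_char (R : realType) (A : set R) v :
  (forall z, A z -> v <= z) ->
  (forall eps, 0 < eps -> exists2 z, A z & z <= v + eps) -> inf A = v.
Proof.
move=> hlb hap.
have ne : A !=set0 by have [z hz _] := hap 1 ltr01; exists z.
have hl : has_lbound A by exists v.
apply/eqP; rewrite eq_le; apply/andP; split; last exact: lb_le_inf.
apply/ler_addgt0Pr => e he; have [z hz hz'] := hap e he.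
exact: le_trans (ge_inf hl hz) hz'.
Qed.

Lemma sum_le_In (R : realType) (A : Type) (f g : A -> R) cs :
  (forall c, In c cs -> f c <= g c) -> \sum_(c <- cs) f c <= \sum_(c <- cs) g c.
Proof.
elim: cs => [|c cs IH] h; first by rewrite !big_nil.
rewrite !big_cons; apply: lerD; first by apply: h; left.
by apply: IH => c' hc; apply: h; right.
Qed.

Lemma sum_ext_In (R : realType) (A : Type) (f g : A -> R) cs :
  (forall c, In c cs -> f c = g c) -> \sum_(c <- cs) f c = \sum_(c <- cs) g c.
Proof.
move=> h; apply/eqP; rewrite eq_le; apply/andP; split; apply: sum_le_In => c hc;
  by rewrite h.
Qed.

Lemma sum_ge0_In (R : realType) (A : Type) (f : A -> R) cs :
  (forall c, In c cs -> 0 <= f c) -> 0 <= \sum_(c <- cs) f c.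
Proof.
move=> h; have := @sum_le_In R A (fun _ => 0) f cs h.
by rewrite big1.
Qed.

Lemma term_le_sum (R : realType) (A : Type) (f : A -> R) cs c :
  (forall c', In c' cs -> 0 <= f c') -> In c cs -> f c <= \sum_(c' <- cs) f c'.
Proof.
elim: cs => //= c0 cs IH h [<-|hc]; rewrite big_cons.
- by rewrite lerDl; apply: sum_ge0_In => c' hc'; apply: h; right.
- rewrite -[f c]add0r; apply: lerD; first by apply: h; left.
  by apply: IH => // c' hc'; apply: h; right.
Qed.

Section Main.
Variable R : realType.
Variable F : expfam R.
Variable th : R.
Variable t0 : tree.
Variable Nn : nat -> nat.
Variable mu : nat -> R.
Variable b0 : bool.
Hypothesis hwf : wf_tree t0.
Hypothesis Xth : meanset F th.
Hypothesis Xmu : forall l, l \in leaves t0 -> meanset F (mu l).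
Hypothesis hb : answer th mu t0 = b0.
Local Notation X := (meanset F).

Definition cost s (lam : nat -> R) := \sum_(l <- leaves s) (Nn l)%:R * kl F (mu l) (lam l).
Definition wit s (lam : nat -> R) :=
  (forall l, l \in leaves s -> X (lam l)) /\ answer th lam s != b0.
Definition Sset s := [set z | exists lam : nat -> R,
  (forall l, l \in leaves s -> X (lam l)) /\ answer th lam s != b0 /\ z = cost s lam].
Local Notation Z := (glr F th t0 Nn mu).

Lemma glrE s : Z s = inf (Sset s).
Proof. by rewrite /glr hb. Qed.

Lemma cost_ge0 s lam : is_node t0 s -> (forall l, l \in leaves s -> X (lam l)) ->
  0 <= cost s lam.
Proof.
move=> hs hX; have [sub _] := is_node_leaves hs.
rewrite /cost big_seq; apply: sumr_ge0 => l hl; apply: mulr_ge0 => //.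
apply: kl_ge0; [exact/Xmu/sub | exact: hX].
Qed.

Lemma S_lb s : is_node t0 s -> lbound (Sset s) 0.
Proof. by move=> hs z [lam [hX [_ ->]]]; exact: cost_ge0. Qed.

Lemma S_ne s : is_node t0 s -> Sset s !=set0.
Proof.
move=> hs.
have [v [Xv hv]] : exists v, X v /\ (th <= v) != b0.
  case: b0.
  - have [v [Xv vlt _]] := approx_below Xth Xth ltr01.
    by exists v; split => //; rewrite leNgt vlt.
  - by exists th; rewrite lexx.
exists (cost s (fun _ => v)), (fun _ => v); split => //; split => //.
by rewrite /answer (tval_const v hwf.2 hs).
Qed.

Lemma Z_le s lam : is_node t0 s -> wit s lam -> Z s <= cost s lam.
Proof.
move=> hs [hX hc]; rewrite glrE; apply: ge_inf; first by exists 0; exact: S_lb.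
by exists lam.
Qed.

Lemma Z_adh s eps : is_node t0 s -> 0 < eps ->
  exists lam, wit s lam /\ cost s lam < Z s + eps.
Proof.
move=> hs he; rewrite glrE.
have [z [lam [hX [hc ->]]] hz] := inf_adherent he (conj (S_ne hs) (ex_intro _ 0 (S_lb hs))).
by exists lam.
Qed.

Lemma scale_eps (n e : R) : 0 <= n -> 0 < e -> n * (e / (n + 1)) <= e.
Proof.
move=> n0 e0; have n1 : 0 < n + 1 by lra.
rewrite mulrCA -[X in _ <= X]mulr1; apply: ler_wpM2l; first exact: ltW.
by rewrite ler_pdivrMr // mul1r lerDl.
Qed.

Lemma Z_leaf l : is_node t0 (Leaf l) ->
  Z (Leaf l) = if b0 then (if th <= mu l then (Nn l)%:R * kl F (mu l) th else 0)
               else (if mu l < th then (Nn l)%:R * kl F (mu l) th else 0).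
Proof.
move=> hs; have [sub _] := is_node_leaves hs.
have Xml : X (mu l) by apply/Xmu/sub; rewrite inE.
have ll : l \in leaves (Leaf l) by rewrite inE.
have costE lam : cost (Leaf l) lam = (Nn l)%:R * kl F (mu l) (lam l).
  by rewrite /cost /= big_seq1.
set n := (Nn l)%:R.
have n0 : 0 <= n by [].
rewrite glrE /Sset /answer /=.
have [hb0|hb0] : b0 = true \/ b0 = false by case: b0; auto.
- rewrite hb0; case: ifP => hm; apply: inf_char.
  + move=> z [lam [hX [hc ->]]]; rewrite costE; apply: ler_wpM2l => //.
    apply: kl_mono_lt => //; first exact: hX.
    by case: (leP th (lam l)) hc => // h _; exact: ltW.
  + move=> e he; have n1 : 0 < n + 1 by lra.
    have [v [Xv vlt hv]] := approx_below Xml Xth (divr_gt0 he n1).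
    exists (cost (Leaf l) (fun _ => v)).
      exists (fun _ => v); split => //; split => //; by rewrite leNgt vlt.
    rewrite costE; apply: le_trans (_ : n * (kl F (mu l) th + e / (n + 1)) <= _).
      by apply: ler_wpM2l => //; exact: ltW.
    by rewrite mulrDr lerD2l; exact: scale_eps.
  + move=> z [lam [hX [hc ->]]]; rewrite costE; apply: mulr_ge0 => //.
    by apply: kl_ge0 => //; exact: hX.
  + move=> e he; exists (cost (Leaf l) mu).
      exists mu; split; first by move=> l0; rewrite inE => /eqP ->.
      by split => //; rewrite hm.
    by rewrite costE kl_xx mulr0 add0r ltW.
- rewrite hb0; case: ifP => hm; apply: inf_char.
  + move=> z [lam [hX [hc ->]]]; rewrite costE; apply: ler_wpM2l => //.
    apply: kl_mono_gt => //; [exact: hX | exact: ltW |].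
    by move: hc; case: (th <= lam l).
  + move=> e he; exists (cost (Leaf l) (fun _ => th)).
      by exists (fun _ => th); split => //; split => //; rewrite lexx.
    by rewrite costE lerDl ltW.
  + move=> z [lam [hX [hc ->]]]; rewrite costE; apply: mulr_ge0 => //.
    by apply: kl_ge0 => //; exact: hX.
  + move=> e he; exists (cost (Leaf l) mu).
      exists mu; split; first by move=> l0; rewrite inE => /eqP ->.
      by split => //; rewrite leNgt hm.
    by rewrite costE kl_xx mulr0 add0r ltW.
Qed.

Lemma costN lb cs lam : cost (Node lb cs) lam = \sum_(c <- cs) cost c lam.
Proof. by rewrite /cost /= big_flatten big_map. Qed.

Lemma wit_ext s lam lam' : (forall l, l \in leaves s -> lam l = lam' l) ->
  wit s lam' -> wit s lam.
Proof.
move=> e [hX ha]; split; first by move=> l hl; rewrite e //; exact: hX.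
by rewrite /answer (tval_ext e).
Qed.

Lemma cost_ext s lam lam' : (forall l, l \in leaves s -> lam l = lam' l) ->
  cost s lam = cost s lam'.
Proof. by move=> e; rewrite /cost; apply: eq_big_seq => l hl; rewrite e. Qed.

Lemma glue cs : (forall c, In c cs -> is_node t0 c) ->
  uniq (flatten (map leaves cs)) -> forall eps : R, 0 < eps ->
  exists lam : nat -> R, (forall c, In c cs -> wit c lam) /\ 
    (\sum_(c <- cs) cost c lam) <= (\sum_(c <- cs) Z c) + eps.
Proof.
elim: cs => [|c cs IH] hn hu e he.
  by exists mu; split => //; rewrite !big_nil add0r ltW.
move: hu => /=; rewrite cat_uniq => /and3P[uc hdis ucs].
have he2 : 0 < e / 2 by rewrite divr_gt0.
have [lam' [hw' hs']] := IH (fun c' hc' => hn c' (or_intror hc')) ucs _ he2.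
have [lamc [hwc hc]] := Z_adh (hn c (or_introl erefl)) he2.
pose lam := fun l => if l \in leaves c then lamc l else lam' l.
have ec : forall l, l \in leaves c -> lam l = lamc l by move=> l hl; rewrite /lam hl.
have ecs : forall c', In c' cs -> forall l, l \in leaves c' -> lam l = lam' l.
  move=> c' hc' l hl; rewrite /lam.
  have hf : l \in flatten (map leaves cs) := In_flatten hc' hl.
  by move: hdis => /hasPn /(_ l hf) /negbTE ->.
exists lam; split.
  move=> c' [<-|hc']; first exact: wit_ext ec hwc.
  exact: wit_ext (ecs c' hc') (hw' c' hc').
rewrite !big_cons (cost_ext ec).
rewrite (sum_ext_In (g := fun c' => cost c' lam')); last first.
  by move=> c' hc'; apply: cost_ext; exact: ecs.
lra.
Qed.

Lemma Z_sum lb cs : is_node t0 (Node lb cs) ->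
  (forall lam, answer th lam (Node lb cs) != b0 <->
     (forall c, In c cs -> answer th lam c != b0)) ->
  Z (Node lb cs) = \sum_(c <- cs) Z c.
Proof.
move=> hs hcond; have [sub u] := is_node_leaves hs; have un := u hwf.1.
have hch : forall c, In c cs -> is_node t0 c := fun c hc => is_child hs hc.
rewrite glrE; apply: inf_char.
- move=> z [lam [hX [hc ->]]]; rewrite costN; apply: sum_le_In => c hc'.
  apply: Z_le; first exact: hch. split.
    by move=> l hl; apply: hX; exact: In_flatten hc' hl.
  exact: (hcond lam).1 hc c hc'.
- move=> e he; have [lam [hw hle]] := glue hch un he.
  exists (cost (Node lb cs) lam); last by rewrite costN; exact: hle.
  exists lam; split; [|split => //].
    by move=> l /flatten_In [c [hc hl]]; exact: (hw c hc).1 l hl.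
  by apply/(hcond lam).2 => c hc; exact: (hw c hc).2.
Qed.

Lemma Z_min lb cs : is_node t0 (Node lb cs) ->
  (forall lam, answer th lam (Node lb cs) != b0 <->
     (exists c, In c cs /\ answer th lam c != b0)) ->
  Z (Node lb cs) = minseq (map Z cs).
Proof.
move=> hs hcond; have [sub u] := is_node_leaves hs; have un := u hwf.1.
have hch : forall c, In c cs -> is_node t0 c := fun c hc => is_child hs hc.
have ne : cs <> [::] := hwf.2 _ _ hs.
rewrite glrE; apply: inf_char.
- move=> z [lam [hX [hc ->]]]; have [c [hc' ha]] := (hcond lam).1 hc.
  have wc : wit c lam.
    by split => // l hl; apply: hX; exact: In_flatten hc' hl.
  apply: le_trans (minseq_le (In_map_mem Z hc')) _.
  apply: le_trans (Z_le (hch c hc') wc) _.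
  rewrite costN; apply: (@term_le_sum _ _ (fun c0 => cost c0 lam) cs c) hc' => c' hc''.
  apply: cost_ge0 (hch _ hc'') _ => l hl; apply: hX; exact: In_flatten hc'' hl.
- move=> e he.
  have nm : map Z cs <> [::] by case: cs ne {hs hcond hch sub u un}.
  have [c [hc ->]] := mem_map_In (minseq_mem nm).
  have [lamc [[hXc hac] hlt]] := Z_adh (hch c hc) he.
  pose lam := fun l => if l \in leaves c then lamc l else mu l.
  have ec : forall l, l \in leaves c -> lam l = lamc l by move=> l hl; rewrite /lam hl.
  exists (cost (Node lb cs) lam).
    exists lam; split; [|split => //].
      move=> l hl; rewrite /lam; case: ifP => h; first exact: hXc.
      by apply: Xmu; exact: sub.
    by apply/(hcond lam).2; exists c; split => //; rewrite /answer (tval_ext ec).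
  suff -> : cost (Node lb cs) lam = cost c lamc by exact: ltW.
  rewrite /cost /=.
  have uc : uniq (leaves c) := In_uniq hc un.
  transitivity (\sum_(l <- flatten (map leaves cs) | l \in leaves c)
                  (Nn l)%:R * kl F (mu l) (lamc l)).
    rewrite [RHS]big_mkcond /=; apply: eq_bigr => l _; rewrite /lam.
    by case: ifP => // _; rewrite kl_xx mulr0.
  rewrite -[LHS]big_filter; apply: perm_big; apply: uniq_perm => //; first exact: filter_uniq.
  move=> l; rewrite mem_filter; apply/andP/idP => [[]//|h]; split => //.
  exact: In_flatten hc h.
Qed.

End Main.

Lemma neqT (x : bool) : (x != true) = ~~ x. Proof. by case: x. Qed.
Lemma neqF (x : bool) : (x != false) = x. Proof. by case: x. Qed.

Lemma cond_max_win (R : realType) (th : R) lam cs : cs <> [::] ->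
  (answer th lam (Node MAX cs) != true <-> forall c, In c cs -> answer th lam c != true).
Proof.
move=> ne; have nm : map (Defs.tval lam) cs <> [::] by case: cs ne.
rewrite /answer /= neqT leNgt negbK (maxseq_lt _ nm).
split => [/all_map_In h c hc | h]; first by rewrite neqT leNgt negbK; exact: (h c hc).
by apply/all_map_In => c hc; have := h c hc; rewrite neqT leNgt negbK.
Qed.

Lemma cond_min_lose (R : realType) (th : R) lam cs : cs <> [::] ->
  (answer th lam (Node MIN cs) != false <-> forall c, In c cs -> answer th lam c != false).
Proof.
move=> ne; have nm : map (Defs.tval lam) cs <> [::] by case: cs ne.
rewrite /answer /= neqF (minseq_ge _ nm).
split => [/all_map_In h c hc | h]; first by rewrite neqF; exact: (h c hc).
by apply/all_map_In => c hc; have := h c hc; rewrite neqF.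
Qed.

Lemma cond_min_win (R : realType) (th : R) lam cs : cs <> [::] ->
  (answer th lam (Node MIN cs) != true <-> exists c, In c cs /\ answer th lam c != true).
Proof.
move=> ne; have nm : map (Defs.tval lam) cs <> [::] by case: cs ne.
rewrite /answer /= neqT leNgt negbK (minseq_lt _ nm).
split => [/has_map_In [c [hc h]] | [c [hc h]]].
  by exists c; split => //; rewrite neqT leNgt negbK.
by apply/has_map_In; exists c; split => //; move: h; rewrite neqT leNgt negbK.
Qed.

Lemma cond_max_lose (R : realType) (th : R) lam cs : cs <> [::] ->
  (answer th lam (Node MAX cs) != false <-> exists c, In c cs /\ answer th lam c != false).
Proof.
move=> ne; have nm : map (Defs.tval lam) cs <> [::] by case: cs ne.
rewrite /answer /= neqF (maxseq_ge _ nm).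
split => [/has_map_In [c [hc h]] | [c [hc h]]].
  by exists c; split => //; rewrite neqF.
by apply/has_map_In; exists c; split => //; move: h; rewrite neqF.
Qed.


Unset Implicit Arguments.
Theorem theorem3 (R : realType) (F : expfam R) (t0 : tree) (theta : R)
    (N : nat -> nat -> nat) (muhat : nat -> nat -> R) :
  wf_tree t0 ->
  meanset F theta ->
  (forall t l, l \in leaves t0 -> meanset F (muhat t l)) ->
  forall (t : nat) (s : tree), is_node t0 s ->
  let Z := glr F theta t0 (N t) (muhat t) in
  if answer theta (muhat t) t0 then
    match s with
    | Leaf l => Z s = (if theta <= muhat t l
                       then (N t l)%:R * kl F (muhat t l) theta else 0)
    | Node MAX cs => Z s = \sum_(c <- cs) Z c
    | Node MIN cs => Z s = minseq (map Z cs)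
    end
  else
    match s with
    | Leaf l => Z s = (if muhat t l < theta
                       then (N t l)%:R * kl F (muhat t l) theta else 0)
    | Node MIN cs => Z s = \sum_(c <- cs) Z c
    | Node MAX cs => Z s = minseq (map Z cs)
    end.
Proof.
move=> hwf Xth Xmu t s hs Z.
have Xm := Xmu t.
case hb: (answer theta (muhat t) t0).
- case: s hs => [l|lb cs] hs.
  + by rewrite /Z (Z_leaf (N t) Xth Xm hb hs).
  + have ne := hwf.2 _ _ hs.
    case: lb hs ne => hs ne.
    * apply: (Z_sum (N t) hwf Xth Xm hb hs) => lam; exact: cond_max_win.
    * apply: (Z_min (N t) hwf Xth Xm hb hs) => lam; exact: cond_min_win.
- case: s hs => [l|lb cs] hs.
  + by rewrite /Z (Z_leaf (N t) Xth Xm hb hs).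
  + have ne := hwf.2 _ _ hs.
    case: lb hs ne => hs ne.
    * apply: (Z_min (N t) hwf Xth Xm hb hs) => lam; exact: cond_max_lose.
    * apply: (Z_sum (N t) hwf Xth Xm hb hs) => lam; exact: cond_min_lose.
Qed.
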